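(* Let $\nu\in\mathbb{R}$, $\beta^1>\beta^2>\beta^3>0$, and let $\mathcal H_0=-\sqrt{\beta^1\beta^2\beta^3}\,\alpha_0$, $\mathcal N=\frac1{\beta^1}+\frac1{\beta^2}+\frac1{\beta^3}-\nu+2\alpha_0$. The reciprocal transformation $dx=\mathcal H_0\,dy+\mathcal N\,d\tau_-$, $dt=d\tau_-$ transforms the Whitham equations of the first negative KdV flow $$\partial_{\tau_-}\beta^i+v^i(\boldsymbol\beta)\partial_y\beta^i=0,\qquad v^i=\frac{2}{\sqrt{\beta^1\beta^2\beta^3}}\left(1-\frac{\prod_{j\ne i}(\beta^i-\beta^j)}{\beta^i(\beta^i+\alpha_1)}\right),$$ into the Camassa--Holm Whitham equations $$\partial_t\beta^i+\tilde C^i(\boldsymbol\beta)\partial_x\beta^i=0,\qquad \tilde C^i(\boldsymbol\beta)=\frac1{\beta^1}+\frac1{\beta^2}+\frac1{\beta^3}-\nu+2\frac{\alpha_0\prod_{j\ne i}(\beta^i-\beta^j)}{\beta^i(\beta^i+\alpha_1)},$$ $i=1,2,3$. Conversely, the inverse reciprocal transformation $dy=\frac1{\mathcal H_0}dx-\frac{\mathcal N}{\mathcal H_0}dt$, $d\tau_-=dt$, transforms the second system into the first.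
   Context: $a$ is a closed cycle on $w^2=(\eta-\beta^1)(\eta-\beta^2)(\eta-\beta^3)$ encircling $[\beta^2,\beta^1]$; $\alpha_1$ and $\alpha_0$ are defined by $\oint_a\frac{(\eta+\alpha_1)d\eta}{w}=0$ and $\oint_a\frac{(1/\eta+\alpha_0)d\eta}{w}=0$. The variables $\beta^i=1/(u^i+\nu)$, where $u^1<u^2<u^3$ are the Riemann invariants of the Camassa--Holm one-phase Whitham equations; in these variables the CH Whitham speeds are the $\tilde C^i$ above. The statement means: if $\boldsymbol\beta(y,\tau_-)$ solves the first system and $(x,t)$ are defined by integrating $dx=\mathcal H_0dy+\mathcal Nd\tau_-$, $dt=d\tau_-$, then $\boldsymbol\beta$ as a function of $(x,t)$ solves the second, and vice versa. *)

(* Defs.v *)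
From HB Require Import structures.
From mathcomp Require Import all_boot all_order all_algebra.
From mathcomp Require Import all_classical all_reals all_analysis.
Set Implicit Arguments. Unset Strict Implicit. Unset Printing Implicit Defensive.
Import Order.TTheory GRing.Theory Num.Theory.
Import numFieldNormedType.Exports.
Local Open Scope classical_set_scope.
Local Open Scope ring_scope.

Section CHWhitham.
Variable R : realType.

(* Riemann invariants beta^1, beta^2, beta^3 are b i1, b i2, b i3. *)
Definition i1 : 'I_3 := @Ordinal 3 0 isT.
Definition i2 : 'I_3 := @Ordinal 3 1 isT.
Definition i3 : 'I_3 := @Ordinal 3 2 isT.

Definition ordered_beta (b : 'I_3 -> R) : Prop :=
  b i1 > b i2 /\ b i2 > b i3 /\ b i3 > 0.

(* w^2 = (eta - beta^1)(eta - beta^2)(eta - beta^3) *)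
Definition cubic (b : 'I_3 -> R) (eta : R) : R := \prod_(j < 3) (eta - b j).

(* On the cycle a (encircling [beta^2, beta^1]) one has
   oint_a f(eta) d eta / w = c * int_{beta^2}^{beta^1} f(eta) d eta / sqrt(-w^2)
   with a nonzero constant c (w is purely imaginary on the cut), so the
   vanishing of the period is the vanishing of the following real integral. *)
Definition aperiod (b : 'I_3 -> R) (f : R -> R) : R :=
  Rintegral (@lebesgue_measure R) `]b i2, b i1[
    (fun eta => f eta / Num.sqrt (- cubic b eta)).

(* alpha_1 : oint_a (eta + alpha_1) d eta / w = 0 ;
   alpha_0 : oint_a (1/eta + alpha_0) d eta / w = 0  (linear in alpha). *)
Definition alpha1 (b : 'I_3 -> R) : R :=
  - aperiod b (fun eta => eta) / aperiod b (fun _ => 1).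
Definition alpha0 (b : 'I_3 -> R) : R :=
  - aperiod b (fun eta => eta^-1) / aperiod b (fun _ => 1).

Definition sqrt_prod (b : 'I_3 -> R) : R := Num.sqrt (\prod_(j < 3) b j).

Definition H0 (b : 'I_3 -> R) : R := - sqrt_prod b * alpha0 b.
Definition Ncoef (nu : R) (b : 'I_3 -> R) : R :=
  \sum_(j < 3) (b j)^-1 - nu + 2 * alpha0 b.

Definition prod_diff (b : 'I_3 -> R) (i : 'I_3) : R :=
  \prod_(j < 3 | j != i) (b i - b j).

Definition vKdV (b : 'I_3 -> R) (i : 'I_3) : R :=
  2 / sqrt_prod b * (1 - prod_diff b i / (b i * (b i + alpha1 b))).

Definition CCH (nu : R) (b : 'I_3 -> R) (i : 'I_3) : R :=
  \sum_(j < 3) (b j)^-1 - nu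
  + 2 * (alpha0 b * prod_diff b i) / (b i * (b i + alpha1 b)).

Definition d1 (f : R * R -> R) (p : R * R) : R := 'D_((1, 0) : R * R) f p.
Definition d2 (f : R * R -> R) (p : R * R) : R := 'D_((0, 1) : R * R) f p.

(* u = (u^1,u^2,u^3), functions of (first coord, second coord) = (space, time),
   solves  d_time u^i + speed(u)_i d_space u^i = 0  at every point of D. *)
Definition whitham_sol (D : set (R * R))
    (speed : ('I_3 -> R) -> 'I_3 -> R) (u : 'I_3 -> R * R -> R) : Prop :=
  forall p, D p -> forall i : 'I_3,
    differentiable (u i) p /\
    d2 (u i) p + speed (fun j => u j p) i * d1 (u i) p = 0.

End CHWhitham.

(* Main.v *)
Require Import Defs.
From HB Require Import structures.
From mathcomp Require Import all_boot all_order all_algebra.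
From mathcomp Require Import all_classical all_reals all_analysis.
From mathcomp Require Import measurable_realfun ring lra zify.
Import Order.TTheory GRing.Theory Num.Theory.
Import numFieldNormedType.Exports.
Local Open Scope classical_set_scope.
Local Open Scope ring_scope.

Section S.
Variable R : realType.
Implicit Types a b x : R.

Lemma cont_sub a x : {for x, continuous (fun y : R => y - a)}.
Proof. apply: continuousB; [exact: cvg_id | exact: cvg_cst]. Qed.

Lemma cont_rsub a x : {for x, continuous (fun y : R => a - y)}.
Proof. apply: continuousB; [exact: cvg_cst | exact: cvg_id]. Qed.

Lemma cont_isqrt (f : R -> R) x : 0 < f x -> {for x, continuous f} ->
  {for x, continuous (fun y => (Num.sqrt (f y))^-1)}.
Proof.
move=> fx cf; apply: continuousV; first by rewrite gt_eqF // sqrtr_gt0.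
apply: (continuous_comp (g := Num.sqrt)) => //; exact: sqrt_continuous.
Qed.


Lemma is_derive_aff (k a x : R) : is_derive x 1 (fun y => k * y + a) k.
Proof.
have H1 : is_derive x 1 (fun y : R => k * y) k.
  apply: DeriveDef; first exact: ex_derive.
  have -> : (fun y : R => k * y) = k \*o id by [].
  by rewrite deriveMl // derive_id mulr1.
apply: DeriveDef; first exact: ex_derive.
rewrite (_ : (fun y => k * y + a) = (fun y : R => k * y) + cst a) //.
by rewrite deriveD // derive_cst addr0 derive_val.
Qed.

Lemma is_derive_sqrt_aff (k a x : R) : 0 < k * x + a ->
  is_derive x 1 (fun y => Num.sqrt (k * y + a)) (k / (2 * Num.sqrt (k * x + a))).
Proof.
move=> h.
have dl : derivable (fun y : R => k * y + a) x 1.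
  by apply: ex_derive; apply: is_derive_aff.
have ds : derivable (@Num.sqrt R) (k * x + a) 1.
  by apply: ex_derive; apply: is_derive1_sqrt.
have -> : (fun y => Num.sqrt (k * y + a)) = Num.sqrt \o (fun y => k * y + a) by [].
apply: DeriveDef.
  apply/derivable1_diffP; apply: differentiable_comp; exact/derivable1_diffP.
rewrite -derive1E derive1_comp // !derive1E derive_sqrt //.
rewrite (@derive_val _ _ _ _ _ _ _ (is_derive_aff k a x)).
by rewrite mulrC.
Qed.

Notation mu := (@lebesgue_measure R).

Definition gfun (K a b : R) (x : R) :=
  K * ((Num.sqrt (x - a))^-1 + (Num.sqrt (b - x))^-1).

Lemma gfun_cont K a b x : a < x < b -> {for x, continuous (gfun K a b)}.
Proof.
move=> /andP[ax xb].
apply: continuousM; first exact: cvg_cst.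
apply: continuousD; apply: cont_isqrt.
- by rewrite subr_gt0.
- apply: continuousB; [exact: cvg_id | exact: cvg_cst].
- by rewrite subr_gt0.
- apply: continuousB; [exact: cvg_cst | exact: cvg_id].
Qed.

Lemma compact_bound K a b c d : a < c -> c < d -> d < b -> 0 <= K ->
  (\int[mu]_(x in `[c, d]) (gfun K a b x)%:E <= (K * (4 * Num.sqrt (b - a)))%:E)%E.
Proof.
move=> ac cd db K0.
pose G x := K * (2 * Num.sqrt (1 * x + - a) - 2 * Num.sqrt (-1 * x + b)).
have dG : forall x, a < x < b -> is_derive x 1 G (gfun K a b x).
  move=> x /andP[ax xb].
  have h1 : 0 < 1 * x + - a by rewrite mul1r subr_gt0.
  have h2 : 0 < -1 * x + b by rewrite mulN1r addrC subr_gt0.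
  have H1 := @is_derive_sqrt_aff 1 (- a) x h1.
  have H2 := @is_derive_sqrt_aff (-1) b x h2.
  have HG := is_deriveZ K (is_deriveB (is_deriveZ 2 H1) (is_deriveZ 2 H2)).
  have eG : G = K \*: ((2 \*: (fun y => Num.sqrt (1 * y + - a))) - (2 \*: (fun y => Num.sqrt (-1 * y + b)))).
    by apply/funext => y.
  rewrite eG; apply: (is_derive_eq HG).
  rewrite /gfun; move: h1 h2; rewrite mul1r mulN1r [-x + b]addrC => h1 h2.
  have s1 : Num.sqrt (x - a) != 0 by rewrite gt_eqF // sqrtr_gt0.
  have s2 : Num.sqrt (b - x) != 0 by rewrite gt_eqF // sqrtr_gt0.
  rewrite /GRing.scale /=. field; by rewrite s1 s2.
have contG : forall x, a < x < b -> {for x, continuous G}.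
  move=> x hx; have := dG x hx => /(@ex_derive _ _ _ _ _ _ _) /derivable1_diffP.
  exact: differentiable_continuous.
rewrite (@continuous_FTC2 _ (gfun K a b) G c d cd).
- rewrite -EFinB lee_fin /G !mul1r !mulN1r ![-_ + b]addrC.
  rewrite -mulrBr; apply: ler_wpM2l => //.
  have h1 : Num.sqrt (d - a) <= Num.sqrt (b - a) by apply: ler_wsqrtr; lra.
  have h2 : Num.sqrt (b - c) <= Num.sqrt (b - a) by apply: ler_wsqrtr; lra.
  have h3 := sqrtr_ge0 (b - d); have h4 := sqrtr_ge0 (c - a).
  lra.
- apply: continuous_in_subspaceT => y; rewrite inE /= in_itv /= => /andP[cy yd].
  apply: gfun_cont; apply/andP; split; lra.
- split.
  + move=> y; rewrite in_itv /= => /andP[cy yd].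
    apply: (@ex_derive _ _ _ _ _ _ _ (dG y _)); apply/andP; split; lra.
  + apply: cvg_at_right_filter; apply: contG; apply/andP; split; lra.
  + apply: cvg_at_left_filter; apply: contG; apply/andP; split; lra.
- move=> y; rewrite in_itv /= => /andP[cy yd].
  rewrite derive1E; apply: (@derive_val _ _ _ _ _ _ _ (dG y _)); apply/andP; split; lra.
Qed.

Lemma gfun_ge0 K a b x : 0 <= K -> 0 <= gfun K a b x.
Proof. by move=> K0; rewrite /gfun mulr_ge0 // addr_ge0 // invr_ge0. Qed.

Lemma gfun_mes K a b : measurable_fun `]a, b[ (gfun K a b).
Proof.
apply: open_continuous_measurable_fun; first exact: interval_open.
by move=> x; rewrite inE /= in_itv /=; exact: gfun_cont.
Qed.

Lemma open_bound K a b : a < b -> 0 <= K ->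
  (\int[mu]_(x in `]a, b[) (gfun K a b x)%:E <= (K * (4 * Num.sqrt (b - a)))%:E)%E.
Proof.
move=> ab K0.
pose e (n : nat) := (b - a) / (n + 3)%:R.
have e_gt0 n : 0 < e n by rewrite divr_gt0 ?subr_gt0 // ltr0n addn3.
have e_lt n : e n < (b - a) / 2.
  rewrite /e ltr_pM2l ?subr_gt0 // ltf_pV2 ?posrE ?ltr0n ?addn3 //.
  by rewrite ltr_nat ?addn3.
have e_le n m : (n <= m)%N -> e m <= e n.
  move=> nm; rewrite /e ler_pM2l ?subr_gt0 // lef_pV2 ?posrE ?ltr0n ?addn3 //.
  by rewrite ler_nat ?addn3 ?ltnS ?leq_add2r.
pose F (n : nat) : set R := (`[a + e n, b - e n])%classic.
have nndF : nondecreasing_seq F.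
  move=> n m nm; rewrite subsetEset => x; rewrite /F /= !in_itv /= => /andP[h1 h2].
  have := e_le n m nm => h3; apply/andP; split; lra.
have mF n : measurable (F n) by exact: measurable_itv.
have UF : \bigcup_n F n = `]a, b[%classic.
  apply/seteqP; split => x /=.
    move=> [n _]; rewrite /F /= !in_itv /= => /andP[h1 h2].
    have := e_gt0 n => h3; apply/andP; split; lra.
  rewrite in_itv /= => /andP[ax xb].
  pose d := Num.min (x - a) (b - x).
  have d0 : 0 < d by rewrite lt_min !subr_gt0 ax xb.
  set N := Num.trunc ((b - a) / d).
  exists N => //.
  have : e N <= d.
    have hN : (b - a) / d < (N.+1)%:R := truncnS_gt _.
    rewrite ltr_pdivrMr // in hN.
    rewrite /e ler_pdivrMr ?ltr0n ?addn3 //.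
    apply: ltW (lt_le_trans hN _); rewrite [d * _]mulrC ler_pM2r // ler_nat; lia.
  move=> h; rewrite /F /= in_itv /=.
  have hd1 : d <= x - a by rewrite /d ge_min lexx.
  have hd2 : d <= b - x by rewrite /d ge_min lexx orbT.
  apply/andP; split; lra.
have mf n : measurable_fun (F n) (fun x => (gfun K a b x)%:E).
  apply/measurable_EFinP; apply: (measurable_funS _ _ (gfun_mes K a b)).
    exact: measurable_itv.
  by rewrite -UF; exact: bigcup_sup.
have f0 n x : F n x -> (0 <= (gfun K a b x)%:E)%E.
  by move=> _; rewrite lee_fin gfun_ge0.
have H := ge0_nondecreasing_set_cvg_integral (mu := mu) nndF mF mf f0.
rewrite -UF -(cvg_lim _ H) //.
apply: lime_le; first by apply/cvg_ex; eexists; exact: H.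
apply: nearW => n; apply: compact_bound => //.
- by have := e_gt0 n; lra.
- by have := e_lt n; lra.
- by have := e_gt0 n; lra.
Qed.

Lemma cubicE (b : 'I_3 -> R) x :
  - cubic b x = (b i1 - x) * (x - b i2) * (x - b i3).
Proof.
rewrite /cubic !big_ord_recr big_ord0 /= mul1r.
have -> : b (widen_ord (leqnSn 2) (widen_ord (leqnSn 1) ord_max)) = b i1.
  by congr b; apply: val_inj.
have -> : b (widen_ord (leqnSn 2) ord_max) = b i2 by congr b; apply: val_inj.
have -> : b ord_max = b i3 by congr b; apply: val_inj.
ring.
Qed.

Lemma bound_aux (fx M P c u : R) : 0 <= fx <= M -> 0 < c -> 0 < u -> c * u <= P ->
  fx / Num.sqrt P <= M / Num.sqrt c * (Num.sqrt u)^-1.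
Proof.
move=> /andP[f0 fM] c0 u0 cuP.
have cu0 : 0 < c * u by rewrite mulr_gt0.
have P0 : 0 < P by apply: lt_le_trans cuP.
apply: (@le_trans _ _ (M / Num.sqrt P)).
  by apply: ler_wpM2r => //; rewrite invr_ge0 sqrtr_ge0.
rewrite -mulrA -invfM -sqrtrM; last exact: ltW.
apply: ler_pM; [lra | by rewrite invr_ge0 | lra |].
rewrite lef_pV2 ?posrE ?sqrtr_gt0 //; exact: ler_wsqrtr.
Qed.

Lemma aperiod_gt0 (b : 'I_3 -> R) (f : R -> R) (m M : R) :
  ordered_beta b -> 0 < m ->
  (forall x, b i2 < x < b i1 -> m <= f x <= M) ->
  (forall x, b i2 < x < b i1 -> {for x, continuous f}) ->
  0 < aperiod b f.
Proof.
move=> [h12 [h23 h3]] m0 fb fc.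
set B1 := b i1 in h12 fb fc *; set B2 := b i2 in h12 h23 fb fc *; set B3 := b i3 in h23 h3 *.
have M0 : 0 <= M.
  have /fb /andP[u v] : B2 < (B1 + B2) / 2 < B1 by apply/andP; split; lra.
  lra.
pose k x := f x / Num.sqrt ((B1 - x) * (x - B2) * (x - B3)).
have ek : (fun eta => f eta / Num.sqrt (- cubic b eta)) = k.
  by apply/funext => x; rewrite cubicE.
rewrite /aperiod ek.
have mD : measurable (`]B2, B1[%classic : set R) by exact: measurable_itv.
have mk : measurable_fun `]B2, B1[ k.
  apply: open_continuous_measurable_fun; first exact: interval_open.
  move=> x; rewrite inE /= in_itv /= => /andP[x2 x1].
  have hx : B2 < x < B1 by apply/andP.
  apply: (@continuousM _ _ f (fun y => (Num.sqrt ((B1 - y) * (y - B2) * (y - B3)))^-1)); first exact: fc.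
  apply: cont_isqrt; first by apply: mulr_gt0; [apply: mulr_gt0|]; lra.
  apply: (@continuousM _ _ (fun y => (B1 - y) * (y - B2)) (fun y => y - B3)).
  apply: (@continuousM _ _ (fun y => (B1 - y)) (fun y => y - B2)).
  - apply: continuousB; [exact: cvg_cst | exact: cvg_id].
  - apply: continuousB; [exact: cvg_id | exact: cvg_cst].
  - apply: continuousB; [exact: cvg_id | exact: cvg_cst].
pose U := (B1 - B2) * (B1 - B2) * (B1 - B3).
have U0 : 0 < U by rewrite /U !mulr_gt0 //; lra.
pose c' := ((B1 - B2) / 2) * (B2 - B3).
have c0 : 0 < c' by rewrite /c' !mulr_gt0 //; lra.
pose K := M / Num.sqrt c'.
have K0 : 0 <= K by rewrite /K divr_ge0.
have klow : forall x, B2 < x < B1 -> m / Num.sqrt U <= k x.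
  move=> x /[dup] hx /andP[x2 x1].
  have P0 : 0 < (B1 - x) * (x - B2) * (x - B3).
    by rewrite !mulr_gt0 // subr_gt0 //; lra.
  have PU : (B1 - x) * (x - B2) * (x - B3) <= U.
    by rewrite /U; apply: ler_pM; [| |apply: ler_pM| ]; try lra; rewrite mulr_ge0 //; lra.
  have /andP[fm _] := fb x hx.
  rewrite /k; apply: (@le_trans _ _ (m / Num.sqrt ((B1 - x) * (x - B2) * (x - B3)))).
    rewrite ler_pM2l // lef_pV2 ?posrE ?sqrtr_gt0 //; exact: ler_wsqrtr.
  by apply: ler_wpM2r => //; rewrite invr_ge0 sqrtr_ge0.
have kup : forall x, B2 < x < B1 -> k x <= gfun K B2 B1 x.
  move=> x /[dup] hx /andP[x2 x1].
  have /andP[fm fM] := fb x hx.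
  have fx0 : 0 <= f x <= M by apply/andP; split; lra.
  have s1 := sqrtr_ge0 (x - B2); have s2 := sqrtr_ge0 (B1 - x).
  have i1 : 0 <= (Num.sqrt (x - B2))^-1 by rewrite invr_ge0.
  have i2 : 0 <= (Num.sqrt (B1 - x))^-1 by rewrite invr_ge0.
  rewrite /k /gfun.
  have [hle|hlt] := lerP (x - B2) (B1 - x).
    apply: (@le_trans _ _ (K * (Num.sqrt (x - B2))^-1)); last first.
      by apply: ler_wpM2l => //; lra.
    apply: bound_aux => //; first lra.
    rewrite /c' -mulrA [(B2 - B3) * _]mulrC mulrA.
    apply: ler_pM; [| |apply: ler_pM|]; try lra.
      by apply: mulr_ge0; lra.
  apply: (@le_trans _ _ (K * (Num.sqrt (B1 - x))^-1)); last first.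
    by apply: ler_wpM2l => //; lra.
  apply: bound_aux => //; first lra.
  rewrite /c' -mulrA [(B2 - B3) * _]mulrC mulrA -[(B1 - x) * (x - B2)]mulrC.
  apply: ler_pM; [| |apply: ler_pM|]; try lra.
    by apply: mulr_ge0; lra.
have k0 : forall x, (`]B2, B1[%classic : set R) x -> (0 <= (k x)%:E)%E.
  move=> x; rewrite /= in_itv /= => hx; rewrite lee_fin.
  apply: le_trans (klow x hx); by rewrite divr_ge0 // ltW.
apply: fine_gt0; apply/andP; split.
- apply: (@lt_le_trans _ _ (\int[mu]_(x in `]B2, B1[) (cst (m / Num.sqrt U)%:E) x)%E).
    have HL : (0 < (@lebesgue_measure R) (`]B2, B1[%classic : set R))%E.
      by rewrite lebesgue_measure_itv /= ifT ?lte_fin // subr_gt0.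
    rewrite integral_cst //; apply: mule_gt0 => //.
    by rewrite lte_fin divr_gt0 // sqrtr_gt0.
  apply: ge0_le_integral => //.
  + by move=> x _; rewrite lee_fin divr_ge0 // ltW.
  + exact/measurable_EFinP.
- apply: (@le_lt_trans _ _ (\int[mu]_(x in `]B2, B1[) (gfun K B2 B1 x)%:E)%E).
    apply: ge0_le_integral => //.
    + exact/measurable_EFinP.
    + by apply/measurable_EFinP; exact: gfun_mes.
  apply: (le_lt_trans (open_bound K B2 B1 h12 K0)); exact: ltry.
Qed.

Lemma diff_snd (p : R * R) :
  differentiable (@snd R R) p /\ 'd (@snd R R) p = (@snd R R) :> (R * R -> R).
Proof.
have lin_snd : linear (@snd R R) by move=> k u v.
pose sL : {linear (R * R)%type -> R} := HB.pack (@snd R R) (GRing.isLinear.Build _ _ _ _ _ lin_snd).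
have cs : continuous sL by move=> q; exact: cvg_snd.
split; first exact: (linear_differentiable _ cs).
exact: (diff_lin _ cs).
Qed.

Lemma dlin_split (g : R * R -> R) q (a c : R) : differentiable g q ->
  'D_((a, c) : R * R) g q = a * d1 g q + c * d2 g q.
Proof.
move=> dg; rewrite /d1 /d2 !deriveE //.
have E := linearP ('d g q) a (1, 0) (c *: (0, 1)).
have E2 := linearZ_LR ('d g q) c (0, 1).
rewrite E2 in E.
transitivity ('d g q (a *: (1, 0) + c *: (0, 1))); last first.
  by rewrite E.
congr ('d g q _).
change ((a, c) = (a * 1 + c * 0, a * 0 + c * 1)).
by rewrite !mulr0 !mulr1 addr0 add0r.
Qed.

Lemma dlin_split' (g : R * R -> R) q (a c : R) : differentiable g q ->
  'd g q (a, c) = a * d1 g q + c * d2 g q.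
Proof. by move=> dg; rewrite -dlin_split // deriveE. Qed.

Lemma chain (f g Z : R * R -> R) (D : set (R * R)) p :
  open D -> D p -> (forall q, D q -> f q = g (Z q, q.2)) ->
  differentiable Z p -> differentiable g (Z p, p.2) ->
  d1 f p = d1 Z p * d1 g (Z p, p.2) /\
  d2 f p = d2 Z p * d1 g (Z p, p.2) + d2 g (Z p, p.2).
Proof.
move=> oD Dp fg dZ dg.
pose phi := fun q : R * R => (Z q, q.2).
have [ds dsE] := diff_snd p.
have dphi : differentiable phi p by apply: differentiable_pair.
have nD : \forall q \near p, D q.
  by move: oD; rewrite openE => /(_ p Dp).
have ef v : 'D_v f p = 'D_v (g \o phi) p.
  by apply: near_eq_derive; apply: filterS nD => q Dq; exact: fg.
have key v : 'D_v f p = 'D_v Z p * d1 g (Z p, p.2) + v.2 * d2 g (Z p, p.2).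
  rewrite ef deriveE; last exact: differentiable_comp.
  rewrite diff_comp //.
  have dp : 'd phi p v = ('d Z p v, v.2).
    have := diff_pair dZ ds; rewrite dsE => ->.
    by [].
  transitivity ('d g (Z p, p.2) ('D_v Z p, v.2)); last exact: (dlin_split' g (Z p, p.2) ('D_v Z p) v.2 dg).
  apply: (congr1 ('d g (Z p, p.2))).
  by rewrite (deriveE v dZ) -dp.
rewrite /d1 /d2 !key; split; first by rewrite mul0r addr0.
by rewrite mul1r.
Qed.


Lemma prodE (b : 'I_3 -> R) : \prod_(j < 3) b j = b i1 * b i2 * b i3.
Proof.
rewrite !big_ord_recr big_ord0 /= mul1r.
have -> : b (widen_ord (leqnSn 2) (widen_ord (leqnSn 1) ord_max)) = b i1.
  by congr b; apply: val_inj.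
have -> : b (widen_ord (leqnSn 2) ord_max) = b i2 by congr b; apply: val_inj.
have -> : b ord_max = b i3 by congr b; apply: val_inj.
by [].
Qed.

Lemma sqrt_prod_gt0 (b : 'I_3 -> R) : ordered_beta b -> 0 < sqrt_prod b.
Proof.
move=> [h12 [h23 h3]]; rewrite /sqrt_prod sqrtr_gt0 prodE.
by rewrite !mulr_gt0 //; lra.
Qed.

Lemma alpha0_lt0 (b : 'I_3 -> R) : ordered_beta b -> alpha0 b < 0.
Proof.
move=> ob; have [h12 [h23 h3]] := ob.
have A0 : 0 < aperiod b (fun eta => eta^-1).
  apply: (@aperiod_gt0 b _ (b i1)^-1 (b i2)^-1) => //.
  - by rewrite invr_gt0; lra.
  - move=> x /andP[x2 x1].
    have x0 : 0 < x by lra.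
    apply/andP; split; rewrite lef_pV2 ?posrE; lra.
  - move=> x /andP[x2 x1]; apply: inv_continuous; rewrite gt_eqF //; lra.
have B0 : 0 < aperiod b (fun _ => 1).
  apply: (@aperiod_gt0 b _ 1 1) => //.
  - by move=> x _; rewrite lexx.
  - by move=> x _; exact: cvg_cst.
rewrite /alpha0 mulNr oppr_lt0 divr_gt0 //.
Qed.

Lemma speed_rel nu (b : 'I_3 -> R) i : sqrt_prod b != 0 ->
  CCH nu b i = Ncoef nu b + vKdV b i * H0 b.
Proof.
move=> s0; rewrite /CCH /Ncoef /vKdV /H0.
set s := sqrt_prod b; set P := prod_diff b i; set Q := b i * (b i + alpha1 b).
rewrite (_ : 2 * (alpha0 b * P) / Q = 2 * alpha0 b * (P / Q)); last by rewrite !mulrA.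
set r := P / Q.
field.
by [].
Qed.

End S.

Theorem proposition5 (R : realType) (nu : R) :
  (forall (D : set (R * R)) (beta Bt : 'I_3 -> R * R -> R) (X : R * R -> R),
    open D ->
    (forall p, D p -> ordered_beta (fun j => beta j p)) ->
    (forall p, D p ->
       [/\ differentiable X p,
           d1 X p = H0 (fun j => beta j p) &
           d2 X p = Ncoef nu (fun j => beta j p)]) ->
    (forall p, D p -> forall i, differentiable (Bt i) (X p, p.2)) ->
    (forall p, D p -> forall i, beta i p = Bt i (X p, p.2)) ->
    whitham_sol D (@vKdV R) beta ->
    whitham_sol [set (X p, p.2) | p in D] (CCH nu) Bt) /\
  (forall (E : set (R * R)) (Bt beta : 'I_3 -> R * R -> R) (Y : R * R -> R),
    open E ->
    (forall q, E q -> ordered_beta (fun j => Bt j q)) ->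
    (forall q, E q ->
       [/\ differentiable Y q,
           d1 Y q = (H0 (fun j => Bt j q))^-1 &
           d2 Y q = - (Ncoef nu (fun j => Bt j q) / H0 (fun j => Bt j q))]) ->
    (forall q, E q -> forall i, differentiable (beta i) (Y q, q.2)) ->
    (forall q, E q -> forall i, Bt i q = beta i (Y q, q.2)) ->
    whitham_sol E (CCH nu) Bt ->
    whitham_sol [set (Y q, q.2) | q in E] (@vKdV R) beta).
Proof.
split.
- move=> D beta Bt X oD ord hX hBt hbeta sol _ [p Dp <-] i.
  split; first exact: hBt.
  have [dX d1X d2X] := hX p Dp.
  have [_ kdv] := sol p Dp i.
  have [c1 c2] := @chain R (beta i) (Bt i) X D p oD Dp (fun q Dq => hbeta q Dq i) dX (hBt p Dp i).
  have eb : (fun j => Bt j (X p, p.2)) = (fun j => beta j p).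
    by apply/funext => j; rewrite hbeta.
  rewrite eb speed_rel; last by rewrite gt_eqF // sqrt_prod_gt0 //; exact: ord.
  rewrite -kdv c1 c2 d1X d2X.
  ring.
- move=> E Bt beta Y oE ord hY hb hBt sol _ [q Eq <-] i.
  split; first exact: hb.
  have [dY d1Y d2Y] := hY q Eq.
  have [_ ch] := sol q Eq i.
  have [c1 c2] := @chain R (Bt i) (beta i) Y E q oE Eq (fun q' Eq' => hBt q' Eq' i) dY (hb q Eq i).
  have eb : (fun j => beta j (Y q, q.2)) = (fun j => Bt j q).
    by apply/funext => j; rewrite hBt.
  set b := fun j => Bt j q.
  have s0 := @sqrt_prod_gt0 R b (ord q Eq).
  have a0 := @alpha0_lt0 R b (ord q Eq).
  have H00 : H0 b != 0.
    rewrite /H0 mulNr oppr_eq0 mulf_neq0 //; [exact: lt0r_neq0 | exact: ltr0_neq0].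
  have ev : vKdV b i = (CCH nu b i - Ncoef nu b) / H0 b.
    by rewrite speed_rel ?gt_eqF // addrC addKr mulfK.
  rewrite eb -/b ev -ch c1 c2 d1Y d2Y -/b.
  field.
  exact: H00.
Qed.
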